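(* Let $P_+$ denote the group of piecewise linear homeomorphisms $f:\mathbb{R}\to\mathbb{R}$ such that $f(0)=0$, the set of slopes of $f$ is bounded, and $f$ is the identity near $-\infty$. Let $f\in P_+$ with $\sup_{t\in\mathbb{R}}|f(t)-t|=\infty$. Then there exists a strictly monotone divergent sequence $\{b_n\}$ of real numbers such that at least one of the following holds: (1) $b_n\to+\infty$, $b_{n+1}>3f(b_n)$ for all $n$, and $f(b_n)-b_n\to+\infty$; (2) $b_n\to+\infty$, $b_{n+1}>3f^{-1}(b_n)$ for all $n$, and $f^{-1}(b_n)-b_n\to+\infty$.
   Context: For a piecewise linear homeomorphism $f$ of $\mathbb{R}$, its set of slopes is $\Lambda(f)=\{f'(t): t\in\mathbb{R}\setminus B(f)\}$, where $B(f)$ is the set of break points (points where $f$ is not differentiable). A set $\Lambda\subset\mathbb{R}\setminus\{0\}$ is bounded if there is $M>1$ with $M^{-1}<|\lambda|<M$ for all $\lambda\in\Lambda$. ''$f$ is the identity near $-\infty$'' means there is $c\in\mathbb{R}$ with $f(t)=t$ for all $t\le c$. The hypothesis $\sup_t|f(t)-t|=\infty$ is equivalent to $[f]\neq[\mathrm{id}]$ in the group $QI(\mathbb{R})$ of quasi-isometries modulo bounded distance. *)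

(* Defs.v *)
From Stdlib Require Import Reals.
Open Scope R_scope.

Definition piecewise_linear (f : R -> R) : Prop :=
  forall a b : R, a < b ->
    exists (n : nat) (x : nat -> R),
      x 0%nat = a /\ x n = b /\
      (forall i : nat, (i < n)%nat -> x i < x (S i)) /\
      (forall i : nat, (i < n)%nat ->
         exists s c : R, forall t : R, x i <= t <= x (S i) -> f t = s * t + c).

Definition homeo_with_inverse (f g : R -> R) : Prop :=
  continuity f /\ continuity g /\
  (forall x, g (f x) = x) /\ (forall y, f (g y) = y).

(* Bounded set of slopes: Lambda(f) = {f'(t) : t not a break point}, i.e. the
   derivatives of f at the points where f is differentiable. *)
Definition bounded_slopes (f : R -> R) : Prop :=
  exists M : R, 1 < M /\
    forall t l : R, derivable_pt_lim f t l -> / M < Rabs l < M.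

Definition identity_near_minus_infty (f : R -> R) : Prop :=
  exists c : R, forall t : R, t <= c -> f t = t.

Definition in_Pplus (f g : R -> R) : Prop :=
  piecewise_linear f /\ homeo_with_inverse f g /\ f 0 = 0 /\
  bounded_slopes f /\ identity_near_minus_infty f.

(* Main.v *)
Require Import Defs.
From Stdlib Require Import Reals Lra Lia Classical ClassicalEpsilon.
Open Scope R_scope.

Lemma far_point (h : R -> R) (c : R) :
  continuity h -> (forall t, t <= c -> h t = t) ->
  (forall A, exists t, h t - t > A) ->
  forall T K, exists t, T < t /\ K < h t - t.
Proof.
  intros Hc Hid Hu T K.
  set (g := fun t => h t - t).
  assert (Hg : forall x, continuity_pt g x).
  { intro x. unfold g. apply continuity_pt_minus. apply Hc. apply derivable_continuous_pt, derivable_pt_id. }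
  destruct (continuity_ab_maj g (Rmin c T) T) as [Mx [HM _]].
  { apply Rmin_r. }
  { intros; apply Hg. }
  destruct (Hu (Rmax K (Rmax (g Mx) 0))) as [t Ht].
  exists t. split.
  - destruct (Rle_or_lt t T) as [H|H]; [|exact H].
    exfalso.
    destruct (Rle_or_lt t c) as [H1|H1].
    + rewrite Hid in Ht by exact H1.
      pose proof (Rmax_r K (Rmax (g Mx) 0)). pose proof (Rmax_r (g Mx) 0). lra.
    + assert (g t <= g Mx).
      { apply HM. split; [|exact H]. pose proof (Rmin_l c T). lra. }
      unfold g in *.
      pose proof (Rmax_r K (Rmax (h Mx - Mx) 0)). pose proof (Rmax_l (h Mx - Mx) 0). lra.
  - pose proof (Rmax_l K (Rmax (g Mx) 0)). lra.
Qed.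

Lemma key (h : R -> R) (c : R) :
  continuity h -> (forall t, t <= c -> h t = t) ->
  (forall A, exists t, h t - t > A) ->
  exists b : nat -> R, (forall n, b n < b (S n)) /\
    cv_infty b /\ (forall n, b (S n) > 3 * h (b n)) /\
    cv_infty (fun n => h (b n) - b n).
Proof.
  intros Hc Hid Hu.
  pose proof (far_point h c Hc Hid Hu) as Hf.
  set (F := fun T K => proj1_sig (constructive_indefinite_description _ (Hf T K))).
  assert (HF : forall T K, T < F T K /\ K < h (F T K) - F T K).
  { intros T K. unfold F. apply (proj2_sig (constructive_indefinite_description _ (Hf T K))). }
  set (b := fix b (n : nat) : R := match n with
        | O => F 0 0
        | S m => F (Rmax (b m) (Rmax (3 * h (b m)) (INR (S m)))) (INR (S m)) end).
  assert (Hb : forall n, INR n < b n /\ INR n < h (b n) - b n).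
  { intro n. destruct n as [|m].
    - simpl. destruct (HF 0 0). lra.
    - change (b (S m)) with (F (Rmax (b m) (Rmax (3 * h (b m)) (INR (S m)))) (INR (S m))).
      destruct (HF (Rmax (b m) (Rmax (3 * h (b m)) (INR (S m)))) (INR (S m))) as [H1 H2].
      pose proof (Rmax_r (b m) (Rmax (3 * h (b m)) (INR (S m)))).
      pose proof (Rmax_r (3 * h (b m)) (INR (S m))). lra. }
  assert (Hcv : forall u : nat -> R, (forall n, INR n < u n) -> cv_infty u).
  { intros u Hu' M. destruct (INR_unbounded M) as [N HN]. exists N. intros n Hn.
    apply le_INR in Hn. specialize (Hu' n). lra. }
  exists b. split; [|split; [|split]].
  - intro n. change (b (S n)) with (F (Rmax (b n) (Rmax (3 * h (b n)) (INR (S n)))) (INR (S n))).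
    destruct (HF (Rmax (b n) (Rmax (3 * h (b n)) (INR (S n)))) (INR (S n))) as [H1 H2].
    pose proof (Rmax_l (b n) (Rmax (3 * h (b n)) (INR (S n)))). lra.
  - apply Hcv. intro n; apply Hb.
  - intro n. change (b (S n)) with (F (Rmax (b n) (Rmax (3 * h (b n)) (INR (S n)))) (INR (S n))).
    destruct (HF (Rmax (b n) (Rmax (3 * h (b n)) (INR (S n)))) (INR (S n))) as [H1 H2].
    pose proof (Rmax_r (b n) (Rmax (3 * h (b n)) (INR (S n)))).
    pose proof (Rmax_l (3 * h (b n)) (INR (S n))). lra.
  - apply Hcv. intro n; apply Hb.
Qed.

Theorem lemma3p1 (f finv : R -> R) :
  in_Pplus f finv ->
  ~ (exists C : R, forall t : R, Rabs (f t - t) <= C) ->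
  exists b : nat -> R,
    ((forall n, b n < b (S n)) \/ (forall n, b (S n) < b n)) /\
    ((cv_infty b /\ (forall n, b (S n) > 3 * f (b n)) /\
        cv_infty (fun n => f (b n) - b n))
     \/
     (cv_infty b /\ (forall n, b (S n) > 3 * finv (b n)) /\
        cv_infty (fun n => finv (b n) - b n))).
Proof.
  intros [_ [[Hcf [Hcg [Hgf Hfg]]] [_ [_ [c Hc]]]]] Hnb.
  destruct (classic (forall A, exists t, f t - t > A)) as [Hu|Hnu].
  - destruct (key f c Hcf Hc Hu) as [b [H1 [H2 [H3 H4]]]].
    exists b. split; [left; exact H1|left; auto].
  - apply not_all_ex_not in Hnu. destruct Hnu as [A HA].
    assert (HA' : forall t, f t - t <= A).
    { intro t. destruct (Rle_or_lt (f t - t) A) as [H|H]; [exact H|].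
      exfalso; apply HA; exists t; lra. }
    assert (Hid : forall t, t <= c -> finv t = t).
    { intros t Ht. rewrite <- (Hc t Ht) at 1. apply Hgf. }
    assert (Hu : forall B, exists s, finv s - s > B).
    { intro B. apply NNPP. intro HB. apply Hnb. exists (Rmax A B).
      intro t. assert (finv (f t) - f t <= B).
      { destruct (Rle_or_lt (finv (f t) - f t) B) as [H|H]; [exact H|].
        exfalso; apply HB; exists (f t); lra. }
      rewrite Hgf in H. pose proof (HA' t).
      pose proof (Rmax_l A B). pose proof (Rmax_r A B).
      apply Rabs_le. lra. }
    destruct (key finv c Hcg Hid Hu) as [b [H1 [H2 [H3 H4]]]].
    exists b. split; [left; exact H1|right; auto].
Qed.
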